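(* Let $V$ be a set of size $n$ and $P(V)$ its power set. Let $f_1,f_2,g:P(V)\to[0,+\infty)$ with $g(\emptyset)=g(V)=0$ and $g(S)>0$ for all $\emptyset\ne S\subsetneq V$. Define $f(S)=\min\{f_1(S),f_2(S)\}$ for $S\subseteq V$, let $F^L,F_1^L,F_2^L,G^L$ be the Lovász extensions of $f,f_1,f_2,g$ respectively, and set $\tilde F^L=\min\{F_1^L,F_2^L\}$. Then $F^L(\mathbf{1}_S)=\tilde F^L(\mathbf{1}_S)$ for every $S\subseteq V$. If moreover $f_1(V)=f_2(V)=0$, then $$\min_{\emptyset\ne S\subsetneq V}\frac{f(S)}{g(S)}=\inf_{\mathbf{x}\in\mathbb{R}^n\setminus\{t\mathbf{1}:\,t\in\mathbb{R}\}}\frac{F^L(\mathbf{x})}{G^L(\mathbf{x})}=\inf_{\mathbf{x}\in\mathbb{R}^n\setminus\{t\mathbf{1}:\,t\in\mathbb{R}\}}\frac{\tilde F^L(\mathbf{x})}{G^L(\mathbf{x})}.$$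
   Context: Identify $V$ with $\{1,\dots,n\}$; $\mathbf{1}_S\in\mathbb{R}^n$ is the indicator vector of $S$ and $\mathbf{1}$ the all-ones vector. For $\mathbf{x}\in\mathbb{R}^n$, let $\sigma:\{0,1,\dots,n\}\to\{0,1,\dots,n\}$ be a bijection with $\sigma(0)=0$ and $x_{\sigma(1)}\le\cdots\le x_{\sigma(n)}$, where $x_0:=0$. Set $V_0=V$ and $V_{\sigma(i)}=\{j\in V:x_j>x_{\sigma(i)}\}$ for $i=1,\dots,n-1$. The Lovász extension of $h:P(V)\to[0,+\infty)$ is $H^L(\mathbf{x})=\sum_{i=0}^{n-1}(x_{\sigma(i+1)}-x_{\sigma(i)})\,h(V_{\sigma(i)})$. *)

(* Defs.v *)
From HB Require Import structures.
From mathcomp Require Import all_boot all_order all_algebra.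
From mathcomp Require Import boolp classical_sets reals.
Set Implicit Arguments. Unset Strict Implicit. Unset Printing Implicit Defensive.
Import Order.TTheory GRing.Theory Num.Theory.
Local Open Scope ring_scope.

(* V = 'I_n, vectors x in R^n are functions 'I_n -> R. *)

(* Sorted values x_{sigma(1)} <= ... <= x_{sigma(n)} (the sorted sequence of
   the coordinates of x; index i of this seq is x_{sigma(i+1)}). *)
Definition sorted_vals (R : realType) (n : nat) (x : 'I_n -> R) : seq R :=
  sort <=%R [seq x i | i <- enum 'I_n].

(* Lovász extension, exactly as in the context:
   H^L(x) = sum_{i=0}^{n-1} (x_{sigma(i+1)} - x_{sigma(i)}) h(V_{sigma(i)})
   with x_{sigma(0)} = x_0 = 0, V_{sigma(0)} = V_0 = V and
   V_{sigma(i)} = {j | x_j > x_{sigma(i)}} for i >= 1. *)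
Definition lovasz (R : realType) (n : nat) (h : {set 'I_n} -> R)
    (x : 'I_n -> R) : R :=
  let s := sorted_vals x in
  \sum_(i < n)
    (s`_i - (if i == 0%N :> nat then 0 else s`_(i.-1))) *
    h (if i == 0%N :> nat then [set: 'I_n]
       else [set j | s`_(i.-1) < x j]).

Definition indic (R : realType) (n : nat) (S : {set 'I_n}) : 'I_n -> R :=
  fun i => if i \in S then 1 else 0.

Definition nonconst (R : realType) (n : nat) (x : 'I_n -> R) : Prop :=
  ~ (exists t : R, forall i, x i = t).

(* Main.v *)
Require Import Defs.
From HB Require Import structures.
From mathcomp Require Import all_boot all_order all_algebra.
From mathcomp Require Import boolp classical_sets reals.
From mathcomp Require Import zify.
Import Order.TTheory GRing.Theory Num.Theory.
Local Open Scope ring_scope.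

Lemma count_enumS n (S : {set 'I_n}) : count (mem S) (enum 'I_n) = #|S|.
Proof. rewrite -size_filter cardE /enum_mem -filter_predI. congr size. by apply: eq_filter => x /=; rewrite andbT. Qed.

Lemma map_const_in (T : eqType) (U : Type) (f : T -> U) (c : U) (s : seq T) :
  (forall x, x \in s -> f x = c) -> map f s = nseq (size s) c.
Proof.
elim: s => [//|a s IH] H /=; rewrite H ?mem_head // IH // => x xs.
by apply: H; rewrite inE xs orbT.
Qed.

Lemma sorted_vals_indic (R : realType) n (S : {set 'I_n}) :
  sorted_vals (indic R S) = nseq (n - #|S|) 0 ++ nseq #|S| 1.
Proof.
apply: (sorted_eq le_trans le_anti).
- rewrite /sorted_vals; exact: (sort_sorted (@le_total _ R)).
- rewrite sorted_pairwise; last exact: le_trans.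
  rewrite pairwise_cat; apply/and3P; split.
  + apply/allrelP => a b /nseqP[-> _] /nseqP[-> _]; exact: ler01.
  + elim: (n - #|S|)%N => //= k ->; rewrite andbT; apply/allP => a /nseqP[-> _]; exact: lexx.
  + elim: #|S| => //= k ->; rewrite andbT; apply/allP => a /nseqP[-> _]; exact: lexx.
rewrite /sorted_vals perm_sort.
have P : perm_eq (enum 'I_n) ([seq x <- enum 'I_n | mem S x] ++ [seq x <- enum 'I_n | predC (mem S) x]).
  by rewrite perm_sym; apply/permPl; exact: perm_filterC.
apply: perm_trans (perm_map (indic R S) P) _.
rewrite map_cat perm_catC.
rewrite (@map_const_in _ _ _ 0) => [|x]; last first.
  by rewrite mem_filter /= /indic => /andP[/negbTE -> _].
rewrite (@map_const_in _ _ _ 1) => [|x]; last first.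
  by rewrite mem_filter /= /indic => /andP[-> _].
rewrite !size_filter count_enumS -[n in (n - _)%N](size_enum_ord n) -(count_predC (mem S)) count_enumS addKn perm_refl.
by []. Qed.

Lemma nth_indic_vals (R : realType) n (S : {set 'I_n}) i : (i < n)%N ->
  (sorted_vals (indic R S))`_i = if (i < n - #|S|)%N then 0 else 1.
Proof.
move=> lt_in; rewrite sorted_vals_indic nth_cat size_nseq !nth_nseq.
case: ifP => [->//|le_mi].
have := max_card S; rewrite card_ord => leSn.
by have -> : (i - (n - #|S|) < #|S|)%N by lia.
Qed.

Lemma lovasz_indic (R : realType) n (h : {set 'I_n} -> R) (S : {set 'I_n}) :
  lovasz h (indic R S) = if S == finset.set0 then 0 else h S.
Proof.
have := max_card S; rewrite card_ord => leSn.
rewrite /lovasz; case: ifP => [/eqP S0|/negbT SN0].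
  apply: big1 => i _; have lt_in := ltn_ord i.
  have lt' : (i.-1 < n)%N by lia.
  rewrite !nth_indic_vals // S0 cards0 subn0 lt_in lt'.
  by case: ifP; rewrite subrr mul0r.
have k0 : (0 < #|S|)%N by rewrite card_gt0.
have ST : (n - #|S|)%N = 0%N -> S = [set: 'I_n].
  by move=> m0; apply/eqP; rewrite eqEcard finset.subsetT cardsT card_ord; lia.
have E := @nth_indic_vals R n S.
have mn : (n - #|S| < n)%N by lia.
move: (n - #|S|)%N E mn ST => m E mn ST.
rewrite (bigD1 (Ordinal mn)) //= big1 ?addr0; last first.
  move=> i; rewrite -val_eqE /= => neq.
  have lt_in := ltn_ord i.
  rewrite E //.
  have [i0|ipos] := posnP i.
    move: neq; rewrite i0 => /eqP neq.
    by rewrite /= (_ : (0 < m)%N) ?subr0 ?mul0r //; lia.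
  rewrite E; last lia.
  move: (i : nat) neq lt_in ipos => j neq lt_in ipos.
  by case: (ltnP j m) => H1; case: (ltnP j.-1 m) => H2; rewrite ?subrr ?mul0r //; exfalso; lia.
rewrite E //.
have [m0|mpos] := posnP m.
  by rewrite m0 /= subr0 mul1r ST.
rewrite ltnn E; last by lia.
rewrite (_ : (m.-1 < m)%N); last by lia.
rewrite subr0 mul1r; congr h; apply/setP => j; rewrite inE /indic.
by case: (j \in S); rewrite ?ltr01 ?ltxx.
Qed.

Section Lov.
Variables (R : realType) (n : nat) (x : 'I_n -> R).
Local Notation s := (sorted_vals x).

Definition lc (i : 'I_n) : R :=
  s`_i - (if i == 0%N :> nat then 0 else s`_(i.-1)).
Definition lT (i : 'I_n) : {set 'I_n} :=
  if i == 0%N :> nat then [set: 'I_n] else [set j | s`_(i.-1) < x j].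

Lemma lovaszE (h : {set 'I_n} -> R) :
  lovasz h x = \sum_(i < n) lc i * h (lT i).
Proof. by []. Qed.

Lemma sv_size : size s = n.
Proof. by rewrite /sorted_vals size_sort size_map size_enum_ord. Qed.

Lemma sv_le i j : (i <= j)%N -> (j < n)%N -> s`_i <= s`_j.
Proof.
move=> ij jn; apply: (sorted_leq_nth le_trans lexx) => //.
- by rewrite /sorted_vals; exact: (sort_sorted (@le_total _ R)).
- by rewrite inE sv_size (leq_ltn_trans ij jn).
- by rewrite inE sv_size.
Qed.

Lemma sv_mem i : (i < n)%N -> exists j, x j = s`_i.
Proof.
move=> lt_in.
have : s`_i \in [seq x j | j <- enum 'I_n].
  by rewrite -(mem_sort <=%R) mem_nth // -/(sorted_vals x) sv_size.
by case/mapP => j _ ->; exists j.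
Qed.

Lemma sv_all j : exists2 i, (i < n)%N & s`_i = x j.
Proof.
have xs : x j \in s by rewrite /sorted_vals mem_sort; apply: map_f; rewrite mem_enum.
exists (index (x j) s); first by rewrite -[X in (_ < X)%N]sv_size index_mem.
exact: nth_index.
Qed.

Lemma lc_ge0 (i : 'I_n) : (i != 0%N :> nat) -> 0 <= lc i.
Proof.
move=> /negbTE i0; rewrite /lc i0 subr_ge0; apply: sv_le => //.
exact: leq_pred.
Qed.

Lemma lT_proper (i : 'I_n) : (i != 0%N :> nat) -> 0 < lc i ->
  lT i != finset.set0 /\ lT i != [set: 'I_n].
Proof.
move=> /negbTE i0; rewrite /lc /lT i0 subr_gt0 => lt.
have [j1 e1] := @sv_mem i (ltn_ord i).
have [j2 e2] : exists j, x j = s`_(i.-1).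
  by apply: sv_mem; rewrite (leq_ltn_trans (leq_pred _)).
split.
  by apply/set0Pn; exists j1; rewrite inE e1.
apply/negP => /eqP E; have : j2 \in [set j | s`_(i.-1) < x j] by rewrite E inE.
by rewrite inE e2 ltxx.
Qed.

Lemma exists_pos : nonconst x -> exists i : 'I_n, (i != 0%N :> nat) && (0 < lc i).
Proof.
move=> nc; apply/not_existsP => H; apply: nc.
have eq0 : forall q, (q < n)%N -> s`_q = s`_0.
  elim=> [//|q IH] qn.
  have /negP := H (Ordinal qn); rewrite negb_and /= -leNgt /lc /= subr_le0 => le.
  rewrite -IH ?(ltnW qn) //; apply: le_anti; rewrite le /=.
  exact: sv_le.
exists s`_0 => j; have [i lt_in <-] := sv_all j; exact: eq0.
Qed.
End Lov.
Arguments lc {R n} x i.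
Arguments lT {R n} x i.
Arguments lovaszE {R n} x h.
Arguments lc_ge0 {R n x i}.
Arguments lT_proper {R n x i}.
Arguments exists_pos {R n x}.

Local Open Scope classical_set_scope.

Theorem theorem2p7 (R : realType) (n : nat)
    (f1 f2 g : {set 'I_n} -> R)
    (hf1 : forall S, 0 <= f1 S) (hf2 : forall S, 0 <= f2 S)
    (hg : forall S, 0 <= g S)
    (hg0 : g finset.set0 = 0) (hgV : g [set: 'I_n]%SET = 0)
    (hgpos : forall S, S != finset.set0 -> S != [set: 'I_n]%SET -> 0 < g S) :
  let f := fun S => Num.min (f1 S) (f2 S) in
  let FL := lovasz f in
  let FtL := fun x => Num.min (lovasz f1 x) (lovasz f2 x) in
  let GL := lovasz g in
  (forall S : {set 'I_n}, FL (indic R S) = FtL (indic R S)) /\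
  (f1 [set: 'I_n]%SET = 0 -> f2 [set: 'I_n]%SET = 0 -> (1 < n)%N ->
   exists S : {set 'I_n},
     [/\ S != finset.set0, S != [set: 'I_n]%SET,
      (forall T : {set 'I_n}, T != finset.set0 -> T != [set: 'I_n]%SET ->
         f S / g S <= f T / g T),
      f S / g S = inf [set FL x / GL x | x in [set x | nonconst x]] &
      f S / g S = inf [set FtL x / GL x | x in [set x | nonconst x]]]).
Proof.
move=> f FL FtL GL; split.
  by move=> S; rewrite /FL /FtL !lovasz_indic; case: ifP => //; rewrite minxx.
move=> f1V f2V n1.
have fV : f [set: 'I_n]%SET = 0 by rewrite /f f1V f2V minxx.
pose P := fun S : {set 'I_n} => (S != finset.set0) && (S != [set: 'I_n]%SET).
pose o : 'I_n := Ordinal (ltnW n1).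
have Po : P [set o]%SET.
  apply/andP; split; first by apply/set0Pn; exists o; rewrite inE.
  apply/eqP => E; have := cardsT 'I_n; rewrite -E cards1 card_ord => n1'.
  by move: (n1); rewrite -n1'.
case: (@arg_minP _ _ _ [set o]%SET P (fun S => f S / g S) Po) => S PS Smin.
case/andP: PS => SN0 SNT.
set r := f S / g S.
have gS : 0 < g S by exact: hgpos.
have Tmin : forall T, T != finset.set0 -> T != [set: 'I_n]%SET -> r * g T <= f T.
  move=> T T0 TT; rewrite -ler_pdivlMr; last exact: hgpos.
  by apply: Smin; apply/andP.
have key : forall x, nonconst x -> [/\ 0 < GL x, r * GL x <= FL x & FL x <= FtL x].
  move=> x nc.
  have [i1 /andP[i0N0 cpos]] := exists_pos nc.
  have lT0 : forall i : 'I_n, (i == 0%N :> nat) -> lT x i = [set: 'I_n]%SET.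
    by move=> i i0; rewrite /lT i0.
  split.
  - rewrite /GL lovaszE (bigD1 i1) //=; apply: ltr_wpDr.
      apply: sumr_ge0 => i _; case: (boolP (i == 0%N :> nat)) => iz.
        by rewrite lT0 // hgV mulr0.
      by apply: mulr_ge0; [exact: lc_ge0|exact: hg].
    have [h1 h2] := lT_proper i0N0 cpos.
    by apply: mulr_gt0 => //; exact: hgpos.
  - rewrite /GL /FL !lovaszE mulr_sumr; apply: ler_sum => i _.
    case: (boolP (i == 0%N :> nat)) => iz.
      by rewrite lT0 // hgV fV !mulr0.
    have [c0|cn] := eqVneq (lc x i) 0; first by rewrite c0 !mul0r mulr0.
    have cp : 0 < lc x i by rewrite lt_def cn (lc_ge0 iz).
    have [h1 h2] := lT_proper iz cp.
    by rewrite mulrCA; apply: ler_wpM2l; [exact: ltW|exact: Tmin].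
  - rewrite /FtL /FL le_min; apply/andP; split; rewrite !lovaszE; apply: ler_sum => i _;
      (case: (boolP (i == 0%N :> nat)) => iz; first by rewrite lT0 // fV ?f1V ?f2V);
      by apply: ler_wpM2l; [exact: lc_ge0|rewrite /f ge_min lexx ?orbT].
have ncS : nonconst (indic R S).
  case/set0Pn: SN0 => j jS.
  have [k kS] : exists k, k \notin S.
    apply/existsP; move: SNT; apply: contraR; rewrite negb_exists => /forallP H.
    by apply/eqP/setP => k; rewrite inE; have := H k; rewrite negbK.
  case=> t Ht; have := Ht j; have := Ht k; rewrite /indic (negbTE kS) jS => <-.
  by move/eqP; rewrite oner_eq0.
have FLS : FL (indic R S) = f S by rewrite /FL lovasz_indic (negbTE SN0).
have FtLS : FtL (indic R S) = f S by rewrite /FtL !lovasz_indic (negbTE SN0).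
have GLS : GL (indic R S) = g S by rewrite /GL lovasz_indic (negbTE SN0).
have infE : forall F : ('I_n -> R) -> R, F (indic R S) = f S ->
    (forall x, nonconst x -> r * GL x <= F x) ->
    r = inf [set F x / GL x | x in [set x | nonconst x]].
  move=> F FS Fge.
  have rin : [set F x / GL x | x in [set x | nonconst x]] r.
    by exists (indic R S) => //; rewrite FS GLS.
  have lb : lbound [set F x / GL x | x in [set x | nonconst x]] r.
    move=> _ [x nc <-]; have [GLp _ _] := key x nc.
    by rewrite ler_pdivlMr //; exact: Fge.
  apply: le_anti; apply/andP; split.
    by apply: lb_le_inf => //; exists r.
  by apply: ge_inf => //; exists r.
exists S; split => //.
- by move=> T T0 TT; apply: Smin; apply/andP.
- apply: infE => // x nc; by have [_ ? _] := key x nc.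
- apply: infE => // x nc; have [_ h1 h2] := key x nc; exact: le_trans h2.
Qed.
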